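(* Let $d\ge1$, $n\ge3$, $u\in\mathbb{C}\setminus\{0\}$. The two-sided ideal of $\mathrm{Y}_{d,n}(u)$ generated by $r_{1,2},\ldots,r_{n-2,n-1}$ (the defining ideal of $\mathrm{FTL}_{d,n}(u)$) is generated by any single element $r_{i,i+1}$, $1\le i\le n-2$.
   Context: The Yokonuma–Hecke algebra $\mathrm{Y}_{d,n}(u)$ is the unital associative $\mathbb{C}$-algebra with generators $g_1,\ldots,g_{n-1},t_1,\ldots,t_n$ and relations: $g_ig_j=g_jg_i$ for $|i-j|>1$; $g_{i+1}g_ig_{i+1}=g_ig_{i+1}g_i$; $t_it_j=t_jt_i$; $t_i^d=1$; $g_it_i=t_{i+1}g_i$; $g_it_{i+1}=t_ig_i$; $g_it_j=t_jg_i$ for $j\ne i,i+1$; $g_i^2=1+(u-1)e_i+(u-1)e_ig_i$, where $e_i=\frac1d\sum_{s=0}^{d-1}t_i^st_{i+1}^{d-s}$. For $w\in S_n$ with reduced expression $s_{i_1}\cdots s_{i_k}$ put $g_w=g_{i_1}\cdots g_{i_k}$; $g_{i,i+1}=\sum_{w\in\langle s_i,s_{i+1}\rangle}g_w$ and $r_{i,i+1}=\sum_{a,b=0}^{d-1}t_i^{a}t_{i+1}^{b-a}t_{i+2}^{-b}\,g_{i,i+1}$. $\mathrm{FTL}_{d,n}(u)$ is the quotient of $\mathrm{Y}_{d,n}(u)$ by the two-sided ideal generated by all $r_{i,i+1}$. *)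

(* Defs.v *)
From HB Require Import structures.
From mathcomp Require Import all_boot all_order all_algebra.
From mathcomp Require Import complex.
From mathcomp Require Import Rstruct.
Set Implicit Arguments. Unset Strict Implicit. Unset Printing Implicit Defensive.
Import Order.TTheory GRing.Theory Num.Theory.
Local Open Scope ring_scope.

Definition CC : Type := (complex Rdefinitions.R).
Definition CC_fieldType : fieldType := CC.

Definition in_ideal (A : pzRingType) (S : seq A) (x : A) : Prop :=
  exists (k : nat) (a b s : nat -> A),
    (forall m, (m < k)%N -> s m \in S) /\
    x = \sum_(m < k) a m * s m * b m.

Section YH.
Variables (A : algType CC_fieldType) (d n : nat) (u : CC_fieldType)
          (g t : nat -> A).

Definition YH_e (i : nat) : A :=
  (d%:R)^-1 *: \sum_(s < d) (t i ^+ s * t i.+1 ^+ (d - s)).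

(* Defining relations of Y_{d,n}(u), generators g_1..g_{n-1}, t_1..t_n (1-based). *)
Definition YH_relations : Prop :=
  (forall i j, (1 <= i <= n.-1)%N -> (1 <= j <= n.-1)%N ->
         (i.+1 < j)%N || (j.+1 < i)%N -> g i * g j = g j * g i) /\
      (forall i, (1 <= i)%N -> (i.+1 <= n.-1)%N ->
         g i.+1 * g i * g i.+1 = g i * g i.+1 * g i) /\
      (forall i j, (1 <= i <= n)%N -> (1 <= j <= n)%N -> t i * t j = t j * t i) /\
      (forall i, (1 <= i <= n)%N -> t i ^+ d = 1) /\
      (forall i, (1 <= i <= n.-1)%N -> g i * t i = t i.+1 * g i) /\
      (forall i, (1 <= i <= n.-1)%N -> g i * t i.+1 = t i * g i) /\
      (forall i j, (1 <= i <= n.-1)%N -> (1 <= j <= n)%N -> j != i -> j != i.+1 ->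
         g i * t j = t j * g i) /\
      (forall i, (1 <= i <= n.-1)%N ->
         g i ^+ 2 = 1 + (u - 1) *: YH_e i + (u - 1) *: (YH_e i * g i)).

(* g_{i,i+1} = sum over w in <s_i, s_{i+1}> (6 elements) of g_w. *)
Definition YH_gpar (i : nat) : A :=
  1 + g i + g i.+1 + g i * g i.+1 + g i.+1 * g i + g i * g i.+1 * g i.

(* Integer powers of t_j (t_j^d = 1): t_j^z is represented by t_j^(z mod d). *)
Definition YH_tpow (j : nat) (z : int) : A := t j ^+ `|(z %% d%:Z)%Z|%N.

Definition YH_r (i : nat) : A :=
  \sum_(a < d) \sum_(b < d)
     (YH_tpow i a%:Z * YH_tpow i.+1 (b%:Z - a%:Z) * YH_tpow i.+2 (- b%:Z) * YH_gpar i).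

End YH.

(* Main.v *)
Require Import Defs.
From HB Require Import structures.
From mathcomp Require Import all_boot all_order all_algebra.

From mathcomp Require complex Rstruct.
From mathcomp Require Import zify ring lra.
Import Order.TTheory GRing.Theory Num.Theory.
Local Open Scope ring_scope.

Module NatCC.
Import complex Rstruct.
Lemma natCC_neq0' (d : nat) : (0 < d)%N -> (d%:R : CC_fieldType) != 0.
Proof.
move=> hd. rewrite (_ : (d%:R : CC_fieldType) = (d%:R : complex.complex Rdefinitions.R)) //.
by rewrite pnatr_eq0 -lt0n.
Qed.
End NatCC.
Definition natCC_neq0 := NatCC.natCC_neq0'.

Lemma invscale (d : nat) (V : lmodType CC_fieldType) (x : V) : (0 < d)%N ->
  ((d%:R : CC_fieldType)^-1) *: (x *+ d) = x.
Proof.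
move=> hd; rewrite -scaler_nat.
transitivity (((d%:R : CC_fieldType)^-1 * d%:R) *: x); first exact: GRing.scalerA.
rewrite mulVf ?scale1r //; exact: natCC_neq0.
Qed.

Section Efacts.
Variables (A : algType CC_fieldType) (d : nat) (a b gg : A).
Hypotheses (hd : (0 < d)%N) (hab : a * b = b * a) (had : a ^+ d = 1)
  (hbd : b ^+ d = 1) (hga : gg * a = b * gg) (hgb : gg * b = a * gg).

Let w := a * b ^+ d.-1.
Let w' := b * a ^+ d.-1.
Let E := \sum_(s < d) w ^+ s.
Let E' := \sum_(s < d) w' ^+ s.

Lemma cab : GRing.comm a b. Proof. by []. Qed.

Lemma term_eq (s : nat) : (s < d)%N -> a ^+ s * b ^+ (d - s) = w ^+ s.
Proof.
move=> hs; rewrite /w exprMn_comm; last first.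
  by apply: commrX; exact: cab.
rewrite -exprM; congr (_ * _).
case: s hs => [|s] hs; first by rewrite subn0 muln0 hbd expr0.
have -> : (d.-1 * s.+1 = (d - s.+1) + d * s)%N.
  rewrite -subn1; nia.
by rewrite exprD exprM hbd expr1n mulr1.
Qed.

Lemma wd : w ^+ d = 1.
Proof.
rewrite /w exprMn_comm; last by apply: commrX; exact: cab.
by rewrite had mul1r -exprM mulnC exprM hbd expr1n.
Qed.

Lemma w'd : w' ^+ d = 1.
Proof.
rewrite /w' exprMn_comm; last by apply: commrX; exact: (esym hab).
by rewrite hbd mul1r -exprM mulnC exprM had expr1n.
Qed.

Lemma cyc (x : A) : x ^+ d = 1 -> x * \sum_(s < d) x ^+ s = \sum_(s < d) x ^+ s.
Proof.
move=> hx; rewrite mulr_sumr.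
case: d hd hx => // d' _ hx.
rewrite big_ord_recr big_ord_recl /= -exprS hx addrC; congr (_ + _).
by apply: eq_bigr => i _; rewrite -exprS.
Qed.


Lemma cba : GRing.comm b a. Proof. by rewrite /GRing.comm hab. Qed.

Lemma cXX i j : GRing.comm (a ^+ i) (b ^+ j).
Proof.
apply: commrX. apply/esym. apply: commrX. exact: cba.
Qed.

Lemma mmul i j k l : (a ^+ i * b ^+ j) * (a ^+ k * b ^+ l) = a ^+ (i + k) * b ^+ (j + l).
Proof.
by rewrite -mulrA (mulrA (b ^+ j)) -(cXX k j) -!mulrA mulrA -!exprD.
Qed.

Lemma wm : w = a ^+ 1 * b ^+ d.-1. Proof. by rewrite expr1. Qed.
Lemma w'm : w' = a ^+ d.-1 * b ^+ 1. Proof. by rewrite /w' expr1 -(cXX _ 1) expr1. Qed.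

Lemma ww' : w * w' = 1.
Proof. rewrite wm w'm mmul. case: d hd had hbd => // d' _ h1 h2 /=.
by rewrite addn1 add1n h1 h2 mulr1. Qed.

Lemma w'w : w' * w = 1.
Proof. rewrite wm w'm mmul. case: d hd had hbd => // d' _ h1 h2 /=.
by rewrite addn1 add1n h1 h2 mulr1. Qed.

Lemma cww' : GRing.comm w w'. Proof. by rewrite /GRing.comm ww' w'w. Qed.

Lemma wE : w * E = E. Proof. exact: cyc wd. Qed.
Lemma w'E' : w' * E' = E'. Proof. exact: cyc w'd. Qed.
Lemma w'E : w' * E = E. Proof. by rewrite -{1}wE mulrA w'w mul1r. Qed.
Lemma wE' : w * E' = E'. Proof. by rewrite -{1}w'E' mulrA ww' mul1r. Qed.

Lemma powfix (x y : A) s : x * y = y -> x ^+ s * y = y.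
Proof. move=> h; elim: s => [|s IH]; first by rewrite mul1r.
by rewrite exprS -mulrA IH h. Qed.

Lemma EE' : E * E' = E' *+ d.
Proof.
rewrite /E mulr_suml (eq_bigr (fun _ => E')); last by move=> i _; apply: powfix wE'.
by rewrite sumr_const card_ord.
Qed.

Lemma E'E : E' * E = E *+ d.
Proof.
rewrite /E' mulr_suml (eq_bigr (fun _ => E)); last by move=> i _; apply: powfix w'E.
by rewrite sumr_const card_ord.
Qed.

Lemma EEsq : E * E = E *+ d.
Proof.
rewrite {1}/E mulr_suml (eq_bigr (fun _ => E)); last by move=> i _; apply: powfix wE.
by rewrite sumr_const card_ord.
Qed.

Lemma cEE' : GRing.comm E E'.
Proof.
apply: commr_sum => j _. apply/esym. apply: commr_sum => i _.
apply: commrX. apply/esym. apply: commrX. exact: cww'.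
Qed.

Lemma mulrn_inj (x y : A) : x *+ d = y *+ d -> x = y.
Proof.
move=> h. have hn := natCC_neq0 d hd.
rewrite -[x](scale1r) -[y]scale1r -(mulVf hn) -!scalerA !scaler_nat h //.
Qed.

Lemma EeqE' : E = E'.
Proof. apply: mulrn_inj. by rewrite -E'E -EE' cEE'. Qed.

Lemma gbX k : gg * b ^+ k = a ^+ k * gg.
Proof. elim: k => [|k IH]; first by rewrite mulr1 mul1r.
by rewrite exprS mulrA hgb -mulrA IH mulrA -exprS. Qed.

Lemma gaX k : gg * a ^+ k = b ^+ k * gg.
Proof. elim: k => [|k IH]; first by rewrite mulr1 mul1r.
by rewrite exprS mulrA hga -mulrA IH mulrA -exprS. Qed.

Lemma gw : gg * w = w' * gg.
Proof. by rewrite /w /w' mulrA hga -!mulrA gbX. Qed.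

Lemma gwX s : gg * w ^+ s = w' ^+ s * gg.
Proof. elim: s => [|s IH]; first by rewrite mulr1 mul1r.
by rewrite exprS mulrA gw -mulrA IH mulrA -exprS. Qed.

Lemma gE : gg * E = E * gg.
Proof.
rewrite {2}EeqE' /E /E' mulr_sumr mulr_suml. apply: eq_bigr => i _; exact: gwX.
Qed.

Definition eel := (d%:R)^-1 *: \sum_(s < d) (a ^+ s * b ^+ (d - s)).

Lemma eelE : eel = (d%:R)^-1 *: E.
Proof. rewrite /eel /E; congr (_ *: _); apply: eq_bigr => i _; exact: term_eq. Qed.

Lemma eel_idem : eel * eel = eel.
Proof.
have hn := natCC_neq0 d hd.
rewrite eelE -scalerAl -scalerAr EEsq; congr (_ *: _); exact: invscale.
Qed.

Lemma eel_comm : eel * gg = gg * eel.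
Proof. by rewrite eelE -scalerAl -scalerAr gE. Qed.

End Efacts.

Section Ginv.
Variables (A : algType CC_fieldType) (u : CC_fieldType) (x e : A).
Hypotheses (hu : u != 0) (hee : e * e = e) (hex : e * x = x * e)
  (hx2 : x ^+ 2 = 1 + (u - 1) *: e + (u - 1) *: (e * x)).

Let Q := e + e * x.
Definition hinv := x + (u^-1 - 1) *: (e + e * x).

Lemma eQ : e * Q = Q. Proof. by rewrite /Q mulrDr mulrA hee. Qed.
Lemma x2Q : x * x = 1 + (u - 1) *: Q.
Proof. by rewrite -expr2 hx2 /Q scalerDr addrA. Qed.

Lemma coef0 : (u - 1) + (u^-1 - 1) + (u^-1 - 1) * (u - 1) = 0.
Proof. by field. Qed.

Lemma key : x * x + (u^-1 - 1) *: (e * x + e * (x * x)) = 1.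
Proof.
rewrite x2Q mulrDr mulr1 -scalerAr eQ.
rewrite (_ : e * x + (e + (u - 1) *: Q) = Q + (u - 1) *: Q); last first.
  by rewrite /Q addrA [e * x + e]addrC.
rewrite -addrA -{2}[Q]scale1r -scalerDl scalerA -scalerDl.
rewrite mulrDr mulr1 addrA coef0 scale0r addr0 //.
Qed.

Lemma hinv_r : x * hinv = 1.
Proof.
rewrite /hinv mulrDr -scalerAr mulrDr -hex mulrA -hex -mulrA.
by rewrite key.
Qed.

Lemma hinv_l : hinv * x = 1.
Proof.
rewrite /hinv mulrDl -scalerAl mulrDl -mulrA.
by rewrite key.
Qed.
End Ginv.

Section Ideal.
Variables (R : pzRingType).

Lemma in_ideal_gen (S : seq R) s : s \in S -> in_ideal S s.
Proof.
move=> hs; exists 1%N, (fun _ => 1), (fun _ => 1), (fun _ => s); split => //.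
by rewrite big_ord1 mul1r mulr1.
Qed.

Lemma in_ideal_0 (S : seq R) : in_ideal S 0.
Proof.
exists 0%N, (fun _ => 0), (fun _ => 0), (fun _ => 0); split => //.
by rewrite big_ord0.
Qed.

Lemma in_ideal_add (S : seq R) x y : in_ideal S x -> in_ideal S y -> in_ideal S (x + y).
Proof.
move=> [k1 [a1 [b1 [s1 [h1 ->]]]]] [k2 [a2 [b2 [s2 [h2 ->]]]]].
exists (k1 + k2)%N, (fun m => if (m < k1)%N then a1 m else a2 (m - k1)%N),
  (fun m => if (m < k1)%N then b1 m else b2 (m - k1)%N),
  (fun m => if (m < k1)%N then s1 m else s2 (m - k1)%N); split.
  move=> m hm; case: ifP => hmk; first exact: h1.
  apply: h2; lia.
rewrite big_split_ord /=; congr (_ + _); apply: eq_bigr => m _ /=.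
  by rewrite ltn_ord.
by rewrite ltnNge leq_addr /= addKn.
Qed.

Lemma in_ideal_mul (S : seq R) a x b : in_ideal S x -> in_ideal S (a * x * b).
Proof.
move=> [k [a1 [b1 [s1 [h1 ->]]]]].
exists k, (fun m => a * a1 m), (fun m => b1 m * b), s1; split => //.
rewrite mulr_sumr mulr_suml; apply: eq_bigr => m _; by rewrite !mulrA.
Qed.

Lemma in_ideal_trans (S T : seq R) x : in_ideal S x -> (forall s, s \in S -> in_ideal T s) -> in_ideal T x.
Proof.
move=> [k [a1 [b1 [s1 [h1 ->]]]]] hST.
elim: k h1 => [|k IH] h1; first by rewrite big_ord0; exact: in_ideal_0.
rewrite big_ord_recr /=; apply: in_ideal_add.
  apply: IH => m hm; apply: h1; lia.
apply: in_ideal_mul; apply: hST; exact: h1.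
Qed.
End Ideal.
Section Conj.
Variables (R : pzRingType) (D : R).

Lemma conj_add x x' y y' : D * x = x' * D -> D * y = y' * D -> D * (x + y) = (x' + y') * D.
Proof. by move=> h1 h2; rewrite mulrDr mulrDl h1 h2. Qed.
Lemma conj_mul x x' y y' : D * x = x' * D -> D * y = y' * D -> D * (x * y) = (x' * y') * D.
Proof. by move=> h1 h2; rewrite mulrA h1 -mulrA h2 mulrA. Qed.
Lemma conj_1 : D * 1 = 1 * D. Proof. by rewrite mul1r mulr1. Qed.
Lemma conj_X x x' m : D * x = x' * D -> D * x ^+ m = x' ^+ m * D.
Proof. move=> h; elim: m => [|m IH]; first exact: conj_1.
by rewrite !exprS; apply: conj_mul. Qed.
Lemma conj_sum k (F F' : 'I_k -> R) : (forall i, D * F i = F' i * D) ->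
  D * \sum_(i < k) F i = (\sum_(i < k) F' i) * D.
Proof. move=> h; rewrite mulr_sumr mulr_suml; exact: eq_bigr. Qed.
End Conj.

Lemma conj3 (R : pzRingType) (a b c x x1 x2 y : R) :
  c * x = x1 * c -> b * x1 = x2 * b -> a * x2 = y * a -> a * b * c * x = y * (a * b * c).
Proof.
move=> hc hb ha; rewrite -mulrA hc mulrA -(mulrA a) hb mulrA ha; by rewrite !mulrA.
Qed.

Lemma inv3 (R : pzRingType) (a b c a' b' c' : R) :
  a * a' = 1 -> b * b' = 1 -> c * c' = 1 -> a * b * c * (c' * b' * a') = 1.
Proof.
move=> ha hb hc; rewrite -!mulrA (mulrA c) hc mul1r (mulrA b) hb mul1r ha //.
Qed.

Section Main.
Variables (d n : nat) (u : CC_fieldType) (A : algType CC_fieldType) (g t : nat -> A).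
Hypotheses (hd : (1 <= d)%N) (hu : u != 0) (HR : YH_relations d n u g t).

Definition hh k := hinv A u (g k) (YH_e d t k).

Lemma hh_inv k : (1 <= k <= n.-1)%N -> g k * hh k = 1 /\ hh k * g k = 1.
Proof.
move=> hk; case: HR => [R1 [R2 [R3 [R4 [R5 [R6 [R7 R8]]]]]]].
have hab : t k * t k.+1 = t k.+1 * t k by apply: R3; lia.
have had : t k ^+ d = 1 by apply: R4; lia.
have hbd : t k.+1 ^+ d = 1 by apply: R4; lia.
have hga := R5 k hk. have hgb := R6 k hk.
have hee : YH_e d t k * YH_e d t k = YH_e d t k.
  exact (eel_idem A d (t k) (t k.+1) hd hab had hbd).
have hex : YH_e d t k * g k = g k * YH_e d t k.
  exact (eel_comm A d (t k) (t k.+1) (g k) hd hab had hbd hga hgb).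
split; [exact: (hinv_r A u (g k) (YH_e d t k) hu hee hex (R8 k hk)) | exact: (hinv_l A u (g k) (YH_e d t k) hu hee (R8 k hk))].
Qed.

Definition dl j := g j * g j.+1 * g j.+2.
Definition dlinv j := hh j.+2 * hh j.+1 * hh j.

Lemma dl_inv j : (1 <= j)%N -> (j + 3 <= n)%N -> dl j * dlinv j = 1 /\ dlinv j * dl j = 1.
Proof.
move=> h1 h2.
have [a1 a2] := hh_inv j ltac:(lia).
have [b1 b2] := hh_inv j.+1 ltac:(lia).
have [c1 c2] := hh_inv j.+2 ltac:(lia).
split; first exact: inv3.
exact: inv3.
Qed.

Lemma dl_g1 j : (1 <= j)%N -> (j + 3 <= n)%N -> dl j * g j = g j.+1 * dl j.
Proof.
move=> h1 h2; case: HR => [R1 [R2 [R3 [R4 [R5 [R6 [R7 R8]]]]]]].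
rewrite /dl -mulrA (R1 j.+2 j) ?mulrA; try lia.
by rewrite -R2 //; try lia; rewrite !mulrA.
Qed.

Lemma dl_g2 j : (1 <= j)%N -> (j + 3 <= n)%N -> dl j * g j.+1 = g j.+2 * dl j.
Proof.
move=> h1 h2; case: HR => [R1 [R2 [R3 [R4 [R5 [R6 [R7 R8]]]]]]].
rewrite /dl -!mulrA (mulrA (g j.+1)) -R2; try lia.
rewrite !mulrA (R1 j j.+2); try lia; done.
Qed.

Lemma dl_t0 j : (1 <= j)%N -> (j + 3 <= n)%N -> dl j * t j = t j.+1 * dl j.
Proof.
move=> h1 h2; case: HR => [R1 [R2 [R3 [R4 [R5 [R6 [R7 R8]]]]]]].
rewrite /dl; apply: (@conj3 _ _ _ _ _ (t j) (t j) _).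
- apply: R7; lia.
- apply: R7; lia.
- apply: R5; lia.
Qed.

Lemma dl_t1 j : (1 <= j)%N -> (j + 3 <= n)%N -> dl j * t j.+1 = t j.+2 * dl j.
Proof.
move=> h1 h2; case: HR => [R1 [R2 [R3 [R4 [R5 [R6 [R7 R8]]]]]]].
rewrite /dl; apply: (@conj3 _ _ _ _ _ (t j.+1) (t j.+2) _).
- apply: R7; lia.
- apply: R5; lia.
- apply: R7; lia.
Qed.

Lemma dl_t2 j : (1 <= j)%N -> (j + 3 <= n)%N -> dl j * t j.+2 = t j.+3 * dl j.
Proof.
move=> h1 h2; case: HR => [R1 [R2 [R3 [R4 [R5 [R6 [R7 R8]]]]]]].
rewrite /dl; apply: (@conj3 _ _ _ _ _ (t j.+3) (t j.+3) _).
- apply: R5; lia.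
- apply: R7; lia.
- apply: R7; lia.
Qed.

Lemma dl_tpow j m z : (1 <= j)%N -> (j + 3 <= n)%N -> (j <= m <= j.+2)%N ->
  dl j * YH_tpow d t m z = YH_tpow d t m.+1 z * dl j.
Proof.
move=> h1 h2 hm; rewrite /YH_tpow; apply: conj_X.
have : (m = j \/ m = j.+1 \/ m = j.+2) by lia.
case=> [->|[->|->]]; [exact: dl_t0 | exact: dl_t1 | exact: dl_t2].
Qed.

Lemma dl_r j : (1 <= j)%N -> (j + 3 <= n)%N ->
  dl j * YH_r d g t j = YH_r d g t j.+1 * dl j.
Proof.
move=> h1 h2; rewrite /YH_r; apply: conj_sum => a; apply: conj_sum => b.
have G1 := dl_g1 j h1 h2. have G2 := dl_g2 j h1 h2.
apply: conj_mul; last first.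
  rewrite /YH_gpar.
  repeat first [apply: conj_add | apply: conj_mul | apply: conj_1 | exact: G1 | exact: G2].
repeat apply: conj_mul; apply: dl_tpow => //; lia.
Qed.

Lemma step_up j : (1 <= j)%N -> (j + 3 <= n)%N ->
  in_ideal [:: YH_r d g t j] (YH_r d g t j.+1).
Proof.
move=> h1 h2; have [i1 i2] := dl_inv j h1 h2.
rewrite -[YH_r d g t j.+1]mulr1 -i1 mulrA -dl_r //.
apply: in_ideal_mul; apply: in_ideal_gen; exact: mem_head.
Qed.

Lemma step_down j : (1 <= j)%N -> (j + 3 <= n)%N ->
  in_ideal [:: YH_r d g t j.+1] (YH_r d g t j).
Proof.
move=> h1 h2; have [i1 i2] := dl_inv j h1 h2.
rewrite -[YH_r d g t j]mul1r -i2 -mulrA dl_r // mulrA.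
apply: in_ideal_mul; apply: in_ideal_gen; exact: mem_head.
Qed.

Lemma reach i j : (1 <= i <= n - 2)%N -> (1 <= j <= n - 2)%N ->
  in_ideal [:: YH_r d g t i] (YH_r d g t j).
Proof.
move=> hi hj.
have base : in_ideal [:: YH_r d g t i] (YH_r d g t i).
  apply: in_ideal_gen; exact: mem_head.
have tr : forall a b, in_ideal [:: YH_r d g t i] (YH_r d g t a) ->
    in_ideal [:: YH_r d g t a] (YH_r d g t b) -> in_ideal [:: YH_r d g t i] (YH_r d g t b).
  move=> a b ha hb; apply: (in_ideal_trans _ _ _ _ hb) => s; rewrite inE => /eqP ->; exact: ha.
case: (leqP i j) => hij.
  have -> : j = (i + (j - i))%N by lia.
  have : (i + (j - i) <= n - 2)%N by lia.
  elim: (j - i)%N => [|k IH] hk; first by rewrite addn0.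
  rewrite addnS; apply: (tr (i + k)%N); first by apply: IH; lia.
  apply: step_up; lia.
have -> : j = (i - (i - j))%N by lia.
have : (1 <= i - (i - j))%N by lia.
elim: (i - j)%N => [|k IH] hk; first by rewrite subn0.
apply: (tr (i - k.+1).+1); last by apply: step_down; lia.
have -> : (i - k.+1).+1 = (i - k)%N by lia.
apply: IH; lia.
Qed.
End Main.

Theorem theorem4 (d n : nat) (u : CC_fieldType) :
  (1 <= d)%N -> (3 <= n)%N -> u != 0 ->
  forall (A : algType CC_fieldType) (g t : nat -> A),
    YH_relations d n u g t ->
    forall i : nat, (1 <= i <= n - 2)%N ->
      forall x : A,
        in_ideal [seq YH_r d g t j | j <- iota 1 (n - 2)] x <->
        in_ideal [:: YH_r d g t i] x.
Proof.
move=> hd hn hu A g t HR i hi x; split => hx.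
  apply: (in_ideal_trans _ _ _ _ hx) => s /mapP [j hj ->].
  rewrite mem_iota in hj.
  apply: (reach _ _ _ _ _ _ hd hu HR) => //; lia.
apply: (in_ideal_trans _ _ _ _ hx) => s; rewrite inE => /eqP ->.
apply: in_ideal_gen; apply/mapP; exists i => //; rewrite mem_iota; lia.
Qed.
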